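(* Let $M$ be a Kokotsakis mesh with planar faces whose central face is a (non-degenerate) triangle $A_1A_2A_3$, in general position in the following sense: for each $i$, $v_i,w_i$ are not collinear and $a_{i-1},a_i$ do not lie in the plane spanned by $v_i,w_i$; the lines $l_1,l_2,l_3$ are pairwise non-parallel, the points $B_1,B_2,B_3$ are not collinear, and $A_i\notin\{B_{i-1},B_i\}$. Then $M$ is not infinitesimally flexible (and hence not flexible).
   Context: A Kokotsakis mesh with central $n$-gon consists of a central face with vertices $A_1,\dots,A_n$ (indices in $\mathbb Z/n\mathbb Z$) and points $V_i,W_i$ such that at each $A_i$ exactly four faces meet, containing the angles $A_{i+1}A_iA_{i-1}$ (central face), $A_{i-1}A_iV_i$, $V_iA_iW_i$, $W_iA_iA_{i+1}$; the face containing $W_iA_iA_{i+1}$ also contains $A_iA_{i+1}V_{i+1}$. Put $a_i=A_{i+1}-A_i$, $v_i=V_i-A_i$, $w_i=W_i-A_i$. $l_i$ is the intersection line of the plane of the central face with the plane through $A_i,V_i,W_i$, and $B_i=l_i\cap l_{i+1}$. Infinitesimally flexible: there is a nonzero infinitesimal isometric deformation with the central face fixed (each face moves infinitesimally rigidly). Flexible: there is a continuous non-constant family of meshes starting at $M$, with the central face fixed, in which each face stays congruent to its initial position. *)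

(* Defs.v *)
From HB Require Import structures.
From mathcomp Require Import all_boot all_order all_algebra.
Set Implicit Arguments. Unset Strict Implicit. Unset Printing Implicit Defensive.
Import Order.TTheory GRing.Theory Num.Theory.
Local Open Scope ring_scope.

Section Geom.
Variable R : realFieldType.
Notation vec := 'rV[R]_3.

Definition dot (u v : vec) : R := \sum_(k < 3) u 0 k * v 0 k.

Definition cross (u v : vec) : vec :=
  let x i := u 0 (inord i) in let y i := v 0 (inord i) in
  \row_(k < 3) [:: x 1%N * y 2%N - x 2%N * y 1%N;
                   x 2%N * y 0%N - x 0%N * y 2%N;
                   x 0%N * y 1%N - x 1%N * y 0%N]`_k.

Definition rigid_vel (om t p : vec) : vec := cross om p + t.

(* A mesh with central triangle: points A i, V i, W i, i : 'I_3 (indices mod 3: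
   succ = ordS, pred = ord_pred). Vectors a_i, v_i, w_i. *)
Definition a_ (A : 'I_3 -> vec) (i : 'I_3) : vec := A (ordS i) - A i.
Definition v_ (A V : 'I_3 -> vec) (i : 'I_3) : vec := V i - A i.
Definition w_ (A W : 'I_3 -> vec) (i : 'I_3) : vec := W i - A i.

Definition central_normal (A : 'I_3 -> vec) : vec :=
  cross (A (ordS 0) - A 0) (A (ord_pred 0) - A 0).

Definition corner_normal (A V W : 'I_3 -> vec) (i : 'I_3) : vec :=
  cross (v_ A V i) (w_ A W i).

Definition on_l (A V W : 'I_3 -> vec) (i : 'I_3) (P : vec) : Prop :=
  dot (central_normal A) (P - A i) = 0 /\ dot (corner_normal A V W i) (P - A i) = 0.

Definition l_dir (A V W : 'I_3 -> vec) (i : 'I_3) : vec :=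
  cross (central_normal A) (corner_normal A V W i).

Definition collinear3 (P Q S : vec) : Prop := cross (Q - P) (S - P) = 0.

(* Kokotsakis mesh with central triangle and planar faces: the side face
   through W_i, A_i, A_{i+1}, V_{i+1} is planar (the central face and the
   corner faces V_i A_i W_i are planar automatically). *)
Definition planar_faces (A V W : 'I_3 -> vec) : Prop :=
  forall i : 'I_3, dot (cross (a_ A i) (w_ A W i)) (V (ordS i) - A i) = 0.

(* Faces: central face A_1A_2A_3,
   corner faces (A_i, V_i, W_i), side faces (A_i, A_{i+1}, W_i, V_{i+1}). *)
Definition inf_flexible (A V W : 'I_3 -> vec) : Prop :=
  exists (dA dV dW : 'I_3 -> vec),
    (forall i, dA i = 0) /\
    (exists i, dV i <> 0 \/ dW i <> 0) /\
    (forall i : 'I_3,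
       exists om t : vec,
         rigid_vel om t (A i) = dA i /\ rigid_vel om t (V i) = dV i /\
         rigid_vel om t (W i) = dW i) /\
    (forall i : 'I_3,
       exists om t : vec,
         rigid_vel om t (A i) = dA i /\ rigid_vel om t (A (ordS i)) = dA (ordS i) /\
         rigid_vel om t (W i) = dW i /\ rigid_vel om t (V (ordS i)) = dV (ordS i)).

End Geom.

(* Main.v *)
Require Import Defs.
From HB Require Import structures.
From mathcomp Require Import all_boot all_order all_algebra.
From mathcomp Require Import ring lra.
Import Order.TTheory GRing.Theory Num.Theory.
Local Open Scope ring_scope.

Set Implicit Arguments. Unset Strict Implicit.

Lemma ord3_cases (k : 'I_3) : k = inord 0 \/ k = inord 1 \/ k = inord 2.
Proof.
case: k => [[|[|[|m]]] Hm]; [left|right;left|right;right|by []];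
  by apply/val_inj; rewrite /= inordK.
Qed.

Lemma dotE (R : realFieldType) (u v : 'rV[R]_3) : dot u v = u 0 (inord 0) * v 0 (inord 0) + u 0 (inord 1) * v 0 (inord 1) + u 0 (inord 2) * v 0 (inord 2).
Proof.
rewrite /dot !big_ord_recl big_ord0 addr0 addrA.
have e0 : ord0 = inord 0 :> 'I_3 by apply/val_inj; rewrite /= inordK.
have e1 : lift ord0 ord0 = inord 1 :> 'I_3 by apply/val_inj; rewrite /= inordK.
have e2 : lift ord0 (lift ord0 ord0) = inord 2 :> 'I_3 by apply/val_inj; rewrite /= inordK.
by rewrite e2 e1 e0.
Qed.

Ltac vec_eq := let k := fresh "k" in apply/rowP => k; case: (ord3_cases k) => [->|[->|->]]; rewrite ?dotE ?mxE ?inordK //= ?dotE.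
Ltac sc_eq := rewrite ?dotE ?mxE ?inordK //=.

Section S.
Variable R : realFieldType.
Notation vec := 'rV[R]_3.
Implicit Types u v w x y a e r N m n : vec.

Lemma crossBr u v w : cross u (v - w) = cross u v - cross u w.
Proof. vec_eq; ring. Qed.
Lemma crossBl u v w : cross (u - v) w = cross u w - cross v w.
Proof. vec_eq; ring. Qed.
Lemma crossZl (k : R) u v : cross (k *: u) v = k *: cross u v.
Proof. vec_eq; ring. Qed.
Lemma cross0l u : cross 0 u = 0.
Proof. vec_eq; ring. Qed.
Lemma cross0r u : cross u 0 = 0.
Proof. vec_eq; ring. Qed.
Lemma dot0l u : dot 0 u = 0.
Proof. sc_eq; ring. Qed.
Lemma dot0r u : dot u 0 = 0.
Proof. sc_eq; ring. Qed.
Lemma dotC u v : dot u v = dot v u.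
Proof. sc_eq; ring. Qed.
Lemma dotBl u v w : dot (u - v) w = dot u w - dot v w.
Proof. sc_eq; ring. Qed.
Lemma dotBr u v w : dot u (v - w) = dot u v - dot u w.
Proof. sc_eq; ring. Qed.
Lemma dotZl (k : R) u v : dot (k *: u) v = k * dot u v.
Proof. sc_eq; ring. Qed.
Lemma dotZr (k : R) u v : dot u (k *: v) = k * dot u v.
Proof. sc_eq; ring. Qed.
Lemma dotDr u v w : dot u (v + w) = dot u v + dot u w.
Proof. sc_eq; ring. Qed.
Lemma triple x v w : dot x (cross v w) = dot (cross x v) w.
Proof. sc_eq; ring. Qed.
Lemma triple2 y v w : dot y (cross v w) = - dot (cross y w) v.
Proof. sc_eq; ring. Qed.
Lemma cross_aa a e : dot (cross a e) a = 0.
Proof. sc_eq; ring. Qed.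
Lemma cross_ee a e : dot (cross a e) e = 0.
Proof. sc_eq; ring. Qed.
Lemma bac r a : cross a (cross r a) = dot a a *: r - dot r a *: a.
Proof. vec_eq; ring. Qed.
Lemma decomp x a e : dot (cross a e) (cross a e) *: x =
  dot (cross x e) (cross a e) *: a + dot (cross a x) (cross a e) *: e
  + dot x (cross a e) *: cross a e.
Proof. vec_eq; ring. Qed.
Lemma cramer y N m n : dot N (cross m n) *: y =
  dot y N *: cross m n + dot y m *: cross n N + dot y n *: cross N m.
Proof. vec_eq; ring. Qed.
Lemma ll N m n : cross (cross N m) (cross N n) = dot N (cross m n) *: N.
Proof. vec_eq; ring. Qed.
Lemma vsub3 (P Q C : vec) : P - Q = (P - C) - (Q - C).
Proof. vec_eq; ring. Qed.
Lemma dot_diff u (P Q C : vec) : dot u (P - Q) = dot u (P - C) - dot u (Q - C).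
Proof. sc_eq; ring. Qed.
Lemma dot_neg u (P C : vec) : dot u (C - P) = - dot u (P - C).
Proof. sc_eq; ring. Qed.
Lemma dot_self0 u : dot u u = 0 -> u = 0.
Proof.
rewrite dotE => h.
have h0 : u 0 (inord 0) = 0 by nra.
have h1 : u 0 (inord 1) = 0 by nra.
have h2 : u 0 (inord 2) = 0 by nra.
vec_eq.
Qed.
End S.

Set Implicit Arguments. Unset Strict Implicit.

Notation i0 := (inord 0 : 'I_3).
Notation i1 := (inord 1 : 'I_3).
Notation i2 := (inord 2 : 'I_3).
Lemma o0 : (0 : 'I_3) = i0. Proof. by apply/val_inj; rewrite /= inordK. Qed.
Lemma s0 : ordS i0 = i1. Proof. by apply/val_inj; rewrite /= !inordK. Qed.
Lemma s1 : ordS i1 = i2. Proof. by apply/val_inj; rewrite /= !inordK. Qed.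
Lemma s2 : ordS i2 = i0. Proof. by apply/val_inj; rewrite /= !inordK. Qed.
Lemma p0 : ord_pred i0 = i2. Proof. by apply/val_inj; rewrite /= !inordK. Qed.
Lemma p1 : ord_pred i1 = i0. Proof. by apply/val_inj; rewrite /= !inordK. Qed.
Lemma p2 : ord_pred i2 = i1. Proof. by apply/val_inj; rewrite /= !inordK. Qed.

Section T.
Variable R : realFieldType.
Notation vec := 'rV[R]_3.

Lemma par_eq (r a : vec) : cross r a = 0 -> a != 0 -> r = (dot r a / dot a a) *: a.
Proof.
move=> h ha.
have haa : dot a a != 0 by apply/eqP => /dot_self0 /eqP; apply/negP.
have := bac r a; rewrite h cross0r => /eqP; rewrite eq_sym subr_eq0 => /eqP h2.
by rewrite -[LHS]scale1r -(mulVf haa) -[X in X = _]scalerA h2 scalerA mulrC.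
Qed.

Lemma side_lemma (A V W : 'I_3 -> vec) (dA dV dW : 'I_3 -> vec) i :
  (forall i, dA i = 0) -> a_ A i != 0 ->
  (exists om t : vec,
         rigid_vel om t (A i) = dA i /\ rigid_vel om t (A (ordS i)) = dA (ordS i) /\
         rigid_vel om t (W i) = dW i /\ rigid_vel om t (V (ordS i)) = dV (ordS i)) ->
  exists lam : R, dW i = cross (lam *: a_ A i) (w_ A W i) /\
    dV (ordS i) = cross (lam *: a_ A i) (v_ A V (ordS i)).
Proof.
move=> HdA ha [om [t [h1 [h2 [h3 h4]]]]].
rewrite /rigid_vel !HdA in h1 h2.
move/eqP: h1; rewrite addrC addr_eq0 => /eqP ht.
rewrite ht in h2 h3 h4.
have hc : cross om (a_ A i) = 0.
  by rewrite /a_ crossBr; move/eqP: h2; rewrite addr_eq0 opprK => /eqP ->; rewrite subrr.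
exists (dot om (a_ A i) / dot (a_ A i) (a_ A i)).
rewrite -par_eq //; split.
  by rewrite -h3 /rigid_vel /w_ crossBr.
rewrite -h4 /rigid_vel /v_ crossBr.
by move/eqP: h2; rewrite addr_eq0 opprK => /eqP ->.
Qed.

Lemma corner_lemma (A V W : 'I_3 -> vec) (dA dV dW : 'I_3 -> vec) i :
  (forall i, dA i = 0) ->
  (exists om t : vec,
         rigid_vel om t (A i) = dA i /\ rigid_vel om t (V i) = dV i /\
         rigid_vel om t (W i) = dW i) ->
  exists om, dV i = cross om (v_ A V i) /\ dW i = cross om (w_ A W i).
Proof.
move=> HdA [om [t [h1 [h2 h3]]]].
rewrite /rigid_vel !HdA in h1 h2 h3.
move/eqP: h1; rewrite addrC addr_eq0 => /eqP ht.
rewrite ht in h2 h3.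
by exists om; rewrite -h2 -h3 /v_ /w_ !crossBr.
Qed.

Lemma rel_lemma (om r r' v w : vec) : cross om v = cross r v -> cross om w = cross r' w ->
  dot r (cross v w) = dot r' (cross v w).
Proof.
move=> h1 h2.
have e1 : dot (om - r) (cross v w) = 0 by rewrite triple crossBl h1 subrr dot0l.
have e2 : dot (om - r') (cross v w) = 0 by rewrite triple2 crossBl h2 subrr dot0l oppr0.
move: e1 e2; rewrite !dotBl => /eqP; rewrite subr_eq0 => /eqP <- /eqP; rewrite subr_eq0 => /eqP.
done.
Qed.

Lemma uniq_lemma (A V W : 'I_3 -> vec) i j P Q :
  cross (l_dir A V W i) (l_dir A V W j) <> 0 ->
  on_l A V W i P -> on_l A V W j P -> on_l A V W i Q -> on_l A V W j Q -> P = Q.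
Proof.
rewrite /l_dir ll => hne [h1 h2] [h3 h4] [h5 h6] [h7 h8].
have hd : dot (central_normal A) (cross (corner_normal A V W i) (corner_normal A V W j)) != 0.
  by apply/eqP => h; apply: hne; rewrite h scale0r.
apply/eqP; rewrite -subr_eq0; apply/eqP.
have := cramer (P - Q) (central_normal A) (corner_normal A V W i) (corner_normal A V W j).
rewrite (dotC (P-Q) (central_normal A)) (dot_diff _ P Q (A i)) h1 h5 subrr scale0r add0r.
rewrite (dotC (P-Q) (corner_normal A V W i)) (dot_diff _ P Q (A i)) h2 h6 subrr scale0r add0r.
rewrite (dotC (P-Q) (corner_normal A V W j)) (dot_diff _ P Q (A j)) h4 h8 subrr scale0r.
by move/eqP; rewrite scaler_eq0 (negbTE hd) /= => /eqP.
Qed.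
End T.

Set Implicit Arguments. Unset Strict Implicit.

Lemma alg (R : realFieldType) (D s t x0 x1 x2 a0 a1 a2 e0 e1 e2 l0 l1 l2 : R) :
 D != 0 -> a0 != 0 -> e1 - a1 != 0 -> l1 != 0 ->
 D*x0 = s*a0 + t*e0 -> D*x1 = s*a1+t*e1 -> D*x2 = s*a2+t*e2 ->
 x0 = 0 -> x1 - a1 = 0 ->
 l2 * (-e0) = l0 * a0 -> l0 * a1 = l1 * (e1 - a1) -> l1 * (e2 - a2) = l2 * (-e2) ->
 x2 - e2 = 0.
Proof.
move=> hD ha0 hp1 hl1 h0 h1 h2 hx0 hx1 r0 r1 r2.
move/eqP: h0; rewrite -subr_eq0 => /eqP h0.
move/eqP: h1; rewrite -subr_eq0 => /eqP h1.
move/eqP: h2; rewrite -subr_eq0 => /eqP h2.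
move/eqP: r0; rewrite -subr_eq0 => /eqP r0.
move/eqP: r1; rewrite -subr_eq0 => /eqP r1.
move/eqP: r2; rewrite -subr_eq0 => /eqP r2.
have E1 : s * l2 - t * l0 = 0.
  apply/eqP; rewrite -(mulrI_eq0 _ (lregP ha0)); apply/eqP.
  have -> : a0 * (s * l2 - t * l0) = - l2 * (D * x0 - (s * a0 + t * e0)) + l2 * D * x0 + t * (l2 * - e0 - l0 * a0) by ring.
  by rewrite h0 hx0 r0; ring.
have E2 : t * l0 - (D - s - t) * l1 = 0.
  apply/eqP; rewrite -(mulrI_eq0 _ (lregP hp1)); apply/eqP.
  have -> : (e1 - a1) * (t * l0 - (D - s - t) * l1) = - l0 * (D * x1 - (s * a1 + t * e1)) + l0 * D * (x1 - a1) + (D - s - t) * (l0 * a1 - l1 * (e1 - a1)) by ring.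
  by rewrite h1 hx1 r1; ring.
apply/eqP; rewrite -(mulrI_eq0 _ (lregP hD)) -(mulrI_eq0 _ (lregP hl1)); apply/eqP.
have -> : l1 * (D * (x2 - e2)) = l1 * (D * x2 - (s * a2 + t * e2)) - s * (l1 * (e2 - a2) - l2 * - e2) + e2 * ((s * l2 - t * l0) + (t * l0 - (D - s - t) * l1)) by ring.
by rewrite h2 r2 E1 E2; ring.
Qed.

Unset Implicit Arguments. Set Strict Implicit.

Theorem corollary6 (R : realFieldType) (A V W B : 'I_3 -> 'rV[R]_3) :
  planar_faces A V W ->
  ~ collinear3 (A 0) (A (ordS 0)) (A (ord_pred 0)) ->
  (forall i, cross (v_ A V i) (w_ A W i) <> 0) ->
  (forall i, dot (cross (v_ A V i) (w_ A W i)) (a_ A (ord_pred i)) <> 0 /\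
             dot (cross (v_ A V i) (w_ A W i)) (a_ A i) <> 0) ->
  (forall i j, i <> j -> cross (l_dir A V W i) (l_dir A V W j) <> 0) ->
  (forall i, on_l A V W i (B i) /\ on_l A V W (ordS i) (B i)) ->
  ~ collinear3 (B 0) (B (ordS 0)) (B (ord_pred 0)) ->
  (forall i, A i <> B (ord_pred i) /\ A i <> B i) ->
  ~ inf_flexible A V W.
Proof.
move=> _ Hnc _ Hpq Hpar HB HBnc _ [dA [dV [dW [HdA [Hnz [Hc Hs]]]]]].
rewrite o0 s0 p0 in Hnc HBnc.
have ha : forall i, a_ A i != 0.
  move=> i; apply/eqP => h; case: (Hpq i) => _; by rewrite h dot0r.
have [l0 [hW0 hV1]] := side_lemma HdA (ha i0) (Hs i0).
have [l1 [hW1 hV2]] := side_lemma HdA (ha i1) (Hs i1).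
have [l2 [hW2 hV0]] := side_lemma HdA (ha i2) (Hs i2).
rewrite s0 in hV1; rewrite s1 in hV2; rewrite s2 in hV0.
have [om0 [cV0 cW0]] := corner_lemma HdA (Hc i0).
have [om1 [cV1 cW1]] := corner_lemma HdA (Hc i1).
have [om2 [cV2 cW2]] := corner_lemma HdA (Hc i2).
have r0 := rel_lemma (etrans (esym cV0) hV0) (etrans (esym cW0) hW0).
have r1 := rel_lemma (etrans (esym cV1) hV1) (etrans (esym cW1) hW1).
have r2 := rel_lemma (etrans (esym cV2) hV2) (etrans (esym cW2) hW2).
rewrite !dotZl !(dotC (a_ A _)) in r0 r1 r2.
have [q0 pp0] := Hpq i0; have [q1 pp1] := Hpq i1; have [q2 pp2] := Hpq i2.
rewrite p0 in q0; rewrite p1 in q1; rewrite p2 in q2.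
have hl1 : l1 != 0.
  apply/eqP => hl1; rewrite hl1 !mul0r in r1 r2.
  have hl0 : l0 = 0.
    by move/eqP: r1; rewrite mulf_eq0 => /orP [/eqP //|/eqP h]; exfalso; exact: q1 h.
  have hl2 : l2 = 0.
    by move/esym/eqP: r2; rewrite mulf_eq0 => /orP [/eqP //|/eqP h]; exfalso; exact: pp2 h.
  case: Hnz => i; case: (ord3_cases i) => [->|[->|->]];
    rewrite ?hV0 ?hV1 ?hV2 ?hW0 ?hW1 ?hW2 ?hl0 ?hl1 ?hl2 !scale0r !cross0l; by case => h; apply: h.
set a := A i1 - A i0; set e := A i2 - A i0; set N := cross a e.
have hN : N != 0 by apply/eqP.
have hD : dot N N != 0 by apply/eqP => /dot_self0 /eqP; apply/negP.
have [[hB0a hB0b] [hB0c hB0d]] := HB i0.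
have [[hB1a hB1b] [hB1c hB1d]] := HB i1.
have [[hB2a hB2b] [hB2c hB2d]] := HB i2.
rewrite s0 in hB0c hB0d; rewrite s1 in hB1c hB1d; rewrite s2 in hB2c hB2d.
have hcN : central_normal A = N by rewrite /central_normal o0 s0 p0.
rewrite hcN in hB0a hB0c.
set x := B i0 - A i0.
have hxN : dot x N = 0 by rewrite dotC.
have hdec := decomp x a e; rewrite -/N hxN scale0r addr0 in hdec.
rewrite /corner_normal in hB0b hB0d hB1b hB1d hB2b hB2d.
rewrite /a_ s0 s1 s2 in r0 r1 r2 q0 q1 q2 pp0 pp1 pp2.
rewrite !(dot_diff _ (A i2) (A i1) (A i0)) !(dot_neg _ (A i2) (A i0)) in r0 r1 r2 q0 q1 q2 pp0 pp1 pp2.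
have hd := fun n => congr1 (dot n) hdec.
have key : on_l A V W i2 (B i0).
  split.
    by rewrite hcN (dot_diff _ (B i0) (A i2) (A i0)) hB0a cross_ee subrr.
  rewrite /corner_normal (dot_diff _ (B i0) (A i2) (A i0)).
  rewrite (dot_diff _ (B i0) (A i1) (A i0)) in hB0d.
  have hd0 := hd (cross (v_ A V i0) (w_ A W i0)).
  have hd1 := hd (cross (v_ A V i1) (w_ A W i1)).
  have hd2 := hd (cross (v_ A V i2) (w_ A W i2)).
  rewrite dotZr (dotDr _ (_ *: a)) !dotZr in hd0.
  rewrite dotZr (dotDr _ (_ *: a)) !dotZr in hd1.
  rewrite dotZr (dotDr _ (_ *: a)) !dotZr in hd2.
  apply: (alg hD _ _ hl1 hd0 hd1 hd2 hB0b hB0d r0 r1 r2).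
    by apply/eqP.
  by apply/eqP.
have [h0a h0b] := HB i0; rewrite s0 in h0b.
have [h1a h1b] := HB i1; rewrite s1 in h1b.
have [h2a h2b] := HB i2; rewrite s2 in h2b.
have e01 : B i0 = B i1.
  apply: (uniq_lemma _ h0b key h1a h1b).
  apply: Hpar; move/(congr1 val); rewrite /= !inordK //.
have e02 : B i0 = B i2.
  apply: (uniq_lemma _ key h0a h2a h2b).
  apply: Hpar; move/(congr1 val); rewrite /= !inordK //.
by apply: HBnc; rewrite /collinear3 -e01 -e02 subrr cross0l.
Qed.
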